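(* Let $(H,\mu_H,\Delta_H,\alpha_H)$ be a Hom-bialgebra, $(A,\mu_A,\alpha_A)$ a left $H$-module Hom-algebra with action $h\otimes a\mapsto h\cdot a$, and $(C,\mu_C,\alpha_C)$ a right $H$-module Hom-algebra with action $c\otimes h\mapsto c\cdot h$, with $\alpha_H,\alpha_A,\alpha_C$ bijective. Consider the Hom-twisting maps $R_1:H\otimes A\to A\otimes H$, $R_1(h\otimes a)=\alpha_H^{-2}(h_1)\cdot\alpha_A^{-1}(a)\otimes\alpha_H^{-1}(h_2)$, $R_2:C\otimes H\to H\otimes C$, $R_2(c\otimes h)=\alpha_H^{-1}(h_1)\otimes\alpha_C^{-1}(c)\cdot\alpha_H^{-2}(h_2)$, and $R_3:C\otimes A\to A\otimes C$, $R_3(c\otimes a)=a\otimes c$. Then $(\mathrm{id}_A\otimes R_2)\circ(R_3\otimes\mathrm{id}_H)\circ(\mathrm{id}_C\otimes R_1)=(R_1\otimes\mathrm{id}_C)\circ(\mathrm{id}_H\otimes R_3)\circ(R_2\otimes\mathrm{id}_A)$; consequently the iterated Hom-twisted tensor product $A\# H\# C:=A\otimes_{R_1}H\otimes_{R_2}C$ is a Hom-associative algebra on $A\otimes H\otimes C$ with structure map $\alpha_A\otimes\alpha_H\otimes\alpha_C$ and multiplication $(a\# h\# c)(a'\# h'\# c')=a(\alpha_H^{-2}(h_1)\cdot\alpha_A^{-1}(a'))\#\alpha_H^{-1}(h_2h'_1)\#(\alpha_C^{-1}(c)\cdot\alpha_H^{-2}(h'_2))c'$.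
   Context: Over a field $k$, no (co)units; $\Delta(h)=h_1\otimes h_2$. Hom-associative algebra $(A,\mu,\alpha)$: $\alpha(aa')=\alpha(a)\alpha(a')$, $\alpha(a)(a'a'')=(aa')\alpha(a'')$. Hom-bialgebra $(H,\mu,\Delta,\alpha)$: $(H,\mu,\alpha)$ Hom-associative, $\Delta(h_1)\otimes\alpha(h_2)=\alpha(h_1)\otimes\Delta(h_2)$, $\Delta(hh')=h_1h'_1\otimes h_2h'_2$, $\Delta(\alpha(h))=\alpha(h_1)\otimes\alpha(h_2)$. Left $H$-module Hom-algebra: Hom-associative $(A,\mu_A,\alpha_A)$ with action satisfying $\alpha_A(h\cdot a)=\alpha_H(h)\cdot\alpha_A(a)$, $\alpha_H(h)\cdot(h'\cdot a)=(hh')\cdot\alpha_A(a)$, $\alpha_H^2(h)\cdot(aa')=(h_1\cdot a)(h_2\cdot a')$. Right $H$-module Hom-algebra: Hom-associative $(C,\mu_C,\alpha_C)$ with action satisfying $\alpha_C(c\cdot h)=\alpha_C(c)\cdot\alpha_H(h)$, $(c\cdot h)\cdot\alpha_H(h')=\alpha_C(c)\cdot(hh')$, $(cc')\cdot\alpha_H^2(h)=(c\cdot h_1)(c'\cdot h_2)$. A Hom-twisting map between Hom-associative $A$ and $B$ is linear $R:B\otimes A\to A\otimes B$ with $(\alpha_A\otimes\alpha_B)\circ R=R\circ(\alpha_B\otimes\alpha_A)$, $R\circ(\alpha_B\otimes\mu_A)=(\mu_A\otimes\alpha_B)\circ(\mathrm{id}\otimes R)\circ(R\otimes\mathrm{id})$,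 $R\circ(\mu_B\otimes\alpha_A)=(\alpha_A\otimes\mu_B)\circ(R\otimes\mathrm{id})\circ(\mathrm{id}\otimes R)$ ($R_1,R_2,R_3$ above are such maps). Given Hom-twisting maps $R_1:B\otimes A\to A\otimes B$, $R_2:C\otimes B\to B\otimes C$, $R_3:C\otimes A\to A\otimes C$ satisfying the braid relation, the iterated Hom-twisted tensor product $A\otimes_{R_1}B\otimes_{R_2}C$ is $A\otimes B\otimes C$ with structure map $\alpha_A\otimes\alpha_B\otimes\alpha_C$ and product $(a\otimes b\otimes c)(a'\otimes b'\otimes c')=a(a'_{R_3})_{R_1}\otimes b_{R_1}b'_{R_2}\otimes(c_{R_3})_{R_2}c'$, where $R_i(y\otimes x)=x_{R_i}\otimes y_{R_i}$. *)

(* Defs.v *)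
(* Tensor products are not available in MathComp; we model
   an element of U (x) V (resp. U (x) V (x) W) by a finite list of pure
   tensors, i.e. the formal sum of its entries, and equality in the tensor
   product by the universal property: two formal sums are equal iff every
   bilinear (trilinear) map into every K-vector space agrees on them. *)
From HB Require Import structures.
From mathcomp Require Import all_boot all_algebra.
Set Implicit Arguments.
Unset Strict Implicit.
Unset Printing Implicit Defensive.
Import GRing.Theory.
Local Open Scope ring_scope.

Section Tensors.
Variable K : fieldType.

Definition islin (U V : lmodType K) (f : U -> V) : Prop :=
  forall (a : K) (x y : U), f (a *: x + y) = a *: f x + f y.

Definition bilin (U V W : lmodType K) (f : U -> V -> W) : Prop :=
  (forall u, islin (f u)) /\ (forall v, islin (fun u => f u v)).

Definition trilin (U V X W : lmodType K) (f : U -> V -> X -> W) : Prop :=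
  [/\ forall u v, islin (f u v),
      forall u x, islin (fun v => f u v x) &
      forall v x, islin (fun u => f u v x)].

Definition teq2 (U V : lmodType K) (s t : seq (U * V)) : Prop :=
  forall (W : lmodType K) (f : U -> V -> W), bilin f ->
    \sum_(p <- s) f p.1 p.2 = \sum_(p <- t) f p.1 p.2.

Definition teq3 (U V X : lmodType K) (s t : seq (U * V * X)) : Prop :=
  forall (W : lmodType K) (f : U -> V -> X -> W), trilin f ->
    \sum_(p <- s) f p.1.1 p.1.2 p.2 = \sum_(p <- t) f p.1.1 p.1.2 p.2.

(* f (x) id and id (x) f on triple tensors, for f : X (x) Y -> X' (x) Y'
   given on pure tensors *)
Definition tens_l (X Y Z X' Y' : Type) (f : X -> Y -> seq (X' * Y'))
  (s : seq (X * Y * Z)) : seq (X' * Y' * Z) :=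
  flatten [seq [seq (q.1, q.2, p.2) | q <- f p.1.1 p.1.2] | p <- s].

Definition tens_r (X Y Z Y' Z' : Type) (f : Y -> Z -> seq (Y' * Z'))
  (s : seq (X * Y * Z)) : seq (X * Y' * Z') :=
  flatten [seq [seq (p.1.1, q.1, q.2) | q <- f p.1.2 p.2] | p <- s].

Definition hom_assoc (A : lmodType K) (mu : A -> A -> A) (al : A -> A) : Prop :=
  [/\ bilin mu, islin al,
      forall a a', al (mu a a') = mu (al a) (al a') &
      forall a a' a'', mu (al a) (mu a' a'') = mu (mu a a') (al a'')].

(* Hom-bialgebra (H, mu, Delta, al); Delta h is a formal sum of pure tensors
   representing Delta(h) = h_1 (x) h_2 *)
Definition hom_bialg (H : lmodType K) (mu : H -> H -> H)
  (Delta : H -> seq (H * H)) (al : H -> H) : Prop :=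
  [/\ hom_assoc mu al,
      forall (a : K) h h', teq2 (Delta (a *: h + h'))
        ([seq (a *: p.1, p.2) | p <- Delta h] ++ Delta h'),
      (* Delta(h_1) (x) al(h_2) = al(h_1) (x) Delta(h_2) *)
      forall h, teq3 [seq (q.1, q.2, al p.2) | p <- Delta h, q <- Delta p.1]
                     [seq (al p.1, q.1, q.2) | p <- Delta h, q <- Delta p.2],
      forall h h', teq2 (Delta (mu h h'))
                        [seq (mu p.1 q.1, mu p.2 q.2) | p <- Delta h, q <- Delta h'] &
      forall h, teq2 (Delta (al h)) [seq (al p.1, al p.2) | p <- Delta h]].

Definition left_mod_hom_alg (H : lmodType K) (muH : H -> H -> H)
  (Delta : H -> seq (H * H)) (alH : H -> H)
  (A : lmodType K) (muA : A -> A -> A) (alA : A -> A) (act : H -> A -> A) : Prop :=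
  [/\ hom_assoc muA alA, bilin act,
      forall h a, alA (act h a) = act (alH h) (alA a),
      forall h h' a, act (alH h) (act h' a) = act (muH h h') (alA a) &
      forall h a a', act (alH (alH h)) (muA a a')
                     = \sum_(p <- Delta h) muA (act p.1 a) (act p.2 a')].

Definition right_mod_hom_alg (H : lmodType K) (muH : H -> H -> H)
  (Delta : H -> seq (H * H)) (alH : H -> H)
  (C : lmodType K) (muC : C -> C -> C) (alC : C -> C) (ract : C -> H -> C) : Prop :=
  [/\ hom_assoc muC alC, bilin ract,
      forall c h, alC (ract c h) = ract (alC c) (alH h),
      forall c h h', ract (ract c h) (alH h') = ract (alC c) (muH h h') &
      forall c c' h, ract (muC c c') (alH (alH h))
                     = \sum_(p <- Delta h) muC (ract c p.1) (ract c' p.2)].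

(* R : Y (x) X -> X (x) Y given on pure tensors, R y x = R(y (x) x), is a
   Hom-twisting map between (X, muX, alX) and (Y, muY, alY) *)
Definition hom_twisting (X Y : lmodType K) (muX : X -> X -> X) (alX : X -> X)
  (muY : Y -> Y -> Y) (alY : Y -> Y) (R : Y -> X -> seq (X * Y)) : Prop :=
  [/\ forall y x, teq2 [seq (alX p.1, alY p.2) | p <- R y x] (R (alY y) (alX x)),
      forall y x x', teq2 (R (alY y) (muX x x'))
        [seq (muX p.1 q.1, alY q.2) | p <- R y x, q <- R p.2 x'] &
      forall y y' x, teq2 (R (muY y y') (alX x))
        [seq (alX q.1, muY q.2 p.2) | p <- R y' x, q <- R y p.1]].

(* product of the iterated Hom-twisted tensor product X (x)_{R1} Y (x)_{R2} Z
   on pure tensors: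
   (a (x) b (x) c)(a' (x) b' (x) c') = a (a'_{R3})_{R1} (x) b_{R1} b'_{R2}
                                        (x) (c_{R3})_{R2} c' *)
Definition itp_pure (X Y Z : Type) (muX : X -> X -> X) (muY : Y -> Y -> Y)
  (muZ : Z -> Z -> Z) (R1 : Y -> X -> seq (X * Y)) (R2 : Z -> Y -> seq (Y * Z))
  (R3 : Z -> X -> seq (X * Z)) (u v : X * Y * Z) : seq (X * Y * Z) :=
  flatten [seq [seq (muX u.1.1 r1.1, muY r1.2 r2.1, muZ r2.2 v.2)
                  | r1 <- R1 u.1.2 r3.1, r2 <- R2 r3.2 v.1.2]
          | r3 <- R3 u.2 v.1.1].

Definition itp (X Y Z : Type) (muX : X -> X -> X) (muY : Y -> Y -> Y)
  (muZ : Z -> Z -> Z) (R1 : Y -> X -> seq (X * Y)) (R2 : Z -> Y -> seq (Y * Z))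
  (R3 : Z -> X -> seq (X * Z)) (s t : seq (X * Y * Z)) : seq (X * Y * Z) :=
  flatten [seq itp_pure muX muY muZ R1 R2 R3 u v | u <- s, v <- t].

Definition alpha3 (X Y Z : Type) (alX : X -> X) (alY : Y -> Y) (alZ : Z -> Z)
  (s : seq (X * Y * Z)) : seq (X * Y * Z) :=
  [seq (alX p.1.1, alY p.1.2, alZ p.2) | p <- s].

Definition hom_assoc3 (X Y Z : lmodType K)
  (mul : seq (X * Y * Z) -> seq (X * Y * Z) -> seq (X * Y * Z))
  (al : seq (X * Y * Z) -> seq (X * Y * Z)) : Prop :=
  [/\ forall s s' t t', teq3 s s' -> teq3 t t' -> teq3 (mul s t) (mul s' t'),
      forall s s', teq3 s s' -> teq3 (al s) (al s'),
      forall s t, teq3 (al (mul s t)) (mul (al s) (al t)) &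
      forall s t u, teq3 (mul (al s) (mul t u)) (mul (mul s t) (al u))].
End Tensors.

(* Main.v *)
Require Import Defs.
From mathcomp Require Import all_boot all_algebra.
Set Implicit Arguments.
Unset Strict Implicit.
Unset Printing Implicit Defensive.
Import GRing.Theory.
Local Open Scope ring_scope.

Section Lin.
Variable K : fieldType.
Implicit Types U V W X Y : lmodType K.

Lemma lin0 U V (f : U -> V) : islin f -> f 0 = 0.
Proof.
move=> hf; have := hf 1 0 0; rewrite !scale1r !addr0 -[in LHS](addr0 (f 0)) => h.
by rewrite (addrI _ h).
Qed.
Lemma linD U V (f : U -> V) x y : islin f -> f (x + y) = f x + f y.
Proof. by move=> hf; have := hf 1 x y; rewrite !scale1r. Qed.
Lemma linZ U V (f : U -> V) a x : islin f -> f (a *: x) = a *: f x.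
Proof. by move=> hf; have := hf a x 0; rewrite !addr0 (lin0 hf) addr0. Qed.
Lemma lin_sum U V (f : U -> V) I (s : seq I) (F : I -> U) : islin f ->
  f (\sum_(p <- s) F p) = \sum_(p <- s) f (F p).
Proof.
move=> hf; elim: s => [|p s IH]; first by rewrite !big_nil (lin0 hf).
by rewrite !big_cons linD // IH.
Qed.

Lemma L_id U : islin (fun x : U => x). Proof. by []. Qed.
Lemma L_comp U V W (g : V -> W) (e : U -> V) : islin g -> islin e -> islin (fun x => g (e x)).
Proof. by move=> hg he a x y; rewrite he hg. Qed.
Lemma L_b1 U V X W (g : V -> X -> W) (e : U -> V) b : bilin g -> islin e -> islin (fun x => g (e x) b).
Proof. by move=> [_ hg] he a x y; rewrite he hg. Qed.
Lemma L_b2 U V X W (g : X -> V -> W) (e : U -> V) b : bilin g -> islin e -> islin (fun x => g b (e x)).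
Proof. by move=> [hg _] he a x y; rewrite he hg. Qed.
Lemma L_t1 U V X Y W (g : V -> X -> Y -> W) (e : U -> V) b c : trilin g -> islin e -> islin (fun x => g (e x) b c).
Proof. by move=> [_ _ hg] he a x y; rewrite he hg. Qed.
Lemma L_t2 U V X Y W (g : X -> V -> Y -> W) (e : U -> V) b c : trilin g -> islin e -> islin (fun x => g b (e x) c).
Proof. by move=> [_ hg _] he a x y; rewrite he hg. Qed.
Lemma L_t3 U V X Y W (g : X -> Y -> V -> W) (e : U -> V) b c : trilin g -> islin e -> islin (fun x => g b c (e x)).
Proof. by move=> [hg _ _] he a x y; rewrite he hg. Qed.
Lemma L_sum U W I (s : seq I) (F : I -> U -> W) : (forall p, islin (F p)) ->
  islin (fun x => \sum_(p <- s) F p x).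
Proof.
move=> hF a x y; rewrite scaler_sumr -big_split; apply: eq_bigr => p _; exact: hF.
Qed.
End Lin.

Section Main.
Variables (K : fieldType)
  (H : lmodType K) (muH : H -> H -> H) (Delta : H -> seq (H * H)) (alH alHi : H -> H)
  (A : lmodType K) (muA : A -> A -> A) (alA alAi : A -> A) (act : H -> A -> A)
  (C : lmodType K) (muC : C -> C -> C) (alC alCi : C -> C) (ract : C -> H -> C).
Hypotheses (hH : hom_bialg muH Delta alH)
  (hA : left_mod_hom_alg muH Delta alH muA alA act)
  (hC : right_mod_hom_alg muH Delta alH muC alC ract)
  (alH_K : cancel alH alHi) (alHi_K : cancel alHi alH)
  (alA_K : cancel alA alAi) (alAi_K : cancel alAi alA)
  (alC_K : cancel alC alCi) (alCi_K : cancel alCi alC).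

Lemma hassH : hom_assoc muH alH. Proof. by case: hH. Qed.
Lemma hassA : hom_assoc muA alA. Proof. by case: hA. Qed.
Lemma hassC : hom_assoc muC alC. Proof. by case: hC. Qed.
Lemma bmuH : bilin muH. Proof. by case: hassH. Qed.
Lemma bmuA : bilin muA. Proof. by case: hassA. Qed.
Lemma bmuC : bilin muC. Proof. by case: hassC. Qed.
Lemma lalH : islin alH. Proof. by case: hassH. Qed.
Lemma lalA : islin alA. Proof. by case: hassA. Qed.
Lemma lalC : islin alC. Proof. by case: hassC. Qed.
Lemma malH x y : alH (muH x y) = muH (alH x) (alH y). Proof. by case: hassH. Qed.
Lemma malA x y : alA (muA x y) = muA (alA x) (alA y). Proof. by case: hassA. Qed.
Lemma malC x y : alC (muC x y) = muC (alC x) (alC y). Proof. by case: hassC. Qed.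
Lemma asH x y z : muH (alH x) (muH y z) = muH (muH x y) (alH z). Proof. by case: hassH. Qed.
Lemma asA x y z : muA (alA x) (muA y z) = muA (muA x y) (alA z). Proof. by case: hassA. Qed.
Lemma asC x y z : muC (alC x) (muC y z) = muC (muC x y) (alC z). Proof. by case: hassC. Qed.
Lemma bact : bilin act. Proof. by case: hA. Qed.
Lemma bract : bilin ract. Proof. by case: hC. Qed.
Lemma act_al h a : alA (act h a) = act (alH h) (alA a). Proof. by case: hA. Qed.
Lemma act_mod h h' a : act (alH h) (act h' a) = act (muH h h') (alA a). Proof. by case: hA. Qed.
Lemma ract_al c h : alC (ract c h) = ract (alC c) (alH h). Proof. by case: hC. Qed.
Lemma ract_mod c h h' : ract (ract c h) (alH h') = ract (alC c) (muH h h'). Proof. by case: hC. Qed.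

Lemma inv_lin (U : lmodType K) (f g : U -> U) : islin f -> cancel f g -> cancel g f -> islin g.
Proof.
move=> hf fK gK a x y; apply: (can_inj fK); by rewrite hf !gK.
Qed.
Lemma lalHi : islin alHi. Proof. exact: inv_lin lalH alH_K alHi_K. Qed.
Lemma lalAi : islin alAi. Proof. exact: inv_lin lalA alA_K alAi_K. Qed.
Lemma lalCi : islin alCi. Proof. exact: inv_lin lalC alC_K alCi_K. Qed.
Lemma malHi x y : alHi (muH x y) = muH (alHi x) (alHi y).
Proof. by apply: (can_inj alH_K); rewrite alHi_K malH !alHi_K. Qed.
Lemma malAi x y : alAi (muA x y) = muA (alAi x) (alAi y).
Proof. by apply: (can_inj alA_K); rewrite alAi_K malA !alAi_K. Qed.
Lemma malCi x y : alCi (muC x y) = muC (alCi x) (alCi y).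
Proof. by apply: (can_inj alC_K); rewrite alCi_K malC !alCi_K. Qed.
Lemma act_ali h a : alAi (act h a) = act (alHi h) (alAi a).
Proof. by apply: (can_inj alA_K); rewrite alAi_K act_al !alAi_K alHi_K. Qed.
Lemma ract_ali c h : alCi (ract c h) = ract (alCi c) (alHi h).
Proof. by apply: (can_inj alC_K); rewrite alCi_K ract_al !alCi_K alHi_K. Qed.

Definition Dl (W : lmodType K) (g : H -> H -> W) h := \sum_(p <- Delta h) g p.1 p.2.

Lemma sumDl (W : lmodType K) (F : H * H -> W) h :
  \sum_(p <- Delta h) F p = Dl (fun u v => F (u, v)) h.
Proof. by apply: eq_bigr => -[]. Qed.

Lemma eq_Dl (W : lmodType K) (g g' : H -> H -> W) h :
  (forall u v, g u v = g' u v) -> Dl g h = Dl g' h.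
Proof. by move=> e; apply: eq_bigr => p _; rewrite e. Qed.

Lemma pull (W W' : lmodType K) (E : W -> W') g h : islin E ->
  E (Dl g h) = Dl (fun u v => E (g u v)) h.
Proof. exact: lin_sum. Qed.

Lemma Dl_comm (W : lmodType K) (G : H -> H -> H -> H -> W) h h' :
  Dl (fun u v => Dl (fun u' v' => G u v u' v') h') h =
  Dl (fun u' v' => Dl (fun u v => G u v u' v') h) h'.
Proof. exact: exchange_big. Qed.

Lemma D_lin (W : lmodType K) (g : H -> H -> W) : bilin g -> islin (Dl g).
Proof.
move=> bg a h h'; case: hH => _ hl _ _ _.
rewrite /Dl (hl a h h' W g bg) big_cat big_map /= scaler_sumr; congr (_ + _).
by apply: eq_bigr => p _; rewrite (linZ _ _ (bg.2 _)).
Qed.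

Lemma D_al (W : lmodType K) (g : H -> H -> W) h : bilin g ->
  Dl g (alH h) = Dl (fun u v => g (alH u) (alH v)) h.
Proof. by move=> bg; case: hH => _ _ _ _ hd; rewrite /Dl (hd h W g bg) big_map. Qed.

Lemma D_mul (W : lmodType K) (g : H -> H -> W) h h' : bilin g ->
  Dl g (muH h h') = Dl (fun u v => Dl (fun u' v' => g (muH u u') (muH v v')) h') h.
Proof.
move=> bg; case: hH => _ _ _ hd _; rewrite /Dl (hd h h' W g bg).
by rewrite big_allpairs_dep.
Qed.

Lemma D_coass (W : lmodType K) (g : H -> H -> H -> W) h : trilin g ->
  Dl (fun u v => Dl (fun u' v' => g u' v' (alH v)) u) h =
  Dl (fun u v => Dl (fun u' v' => g (alH u) u' v') v) h.
Proof.
move=> tg; case: hH => _ _ hd _ _; have := hd h W g tg.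
by rewrite !big_allpairs_dep.
Qed.

Lemma L_Dlp (U W : lmodType K) (G : U -> H -> H -> W) h :
  (forall u v, islin (fun x => G x u v)) -> islin (fun x => Dl (G x) h).
Proof. by move=> hG; apply: L_sum => p; apply: hG. Qed.
Lemma L_Dla (U W : lmodType K) (g : H -> H -> W) (e : U -> H) :
  bilin g -> islin e -> islin (fun x => Dl g (e x)).
Proof. by move=> bg he; apply: L_comp => //; apply: D_lin. Qed.

Ltac prim := first [ eassumption | exact: bmuH | exact: bmuA | exact: bmuC
  | exact: bact | exact: bract | exact: lalH | exact: lalA | exact: lalC
  | exact: lalHi | exact: lalAi | exact: lalCi ].

Ltac lin := first
 [ exact: L_id
 | solve [apply: L_sum => ?; lin]
 | solve [apply: L_Dlp => ? ?; lin]
 | solve [apply: L_Dla; [bil | lin]]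
 | solve [apply: L_t1; [prim | lin]]
 | solve [apply: L_t2; [prim | lin]]
 | solve [apply: L_t3; [prim | lin]]
 | solve [apply: L_b1; [prim | lin]]
 | solve [apply: L_b2; [prim | lin]]
 | solve [apply: L_comp; [prim | lin]] ]
with bil := split => ?; lazy beta; lin.



Ltac tril := split => ? ?; lazy beta; lin.

Lemma D_ali (W : lmodType K) (g : H -> H -> W) h : bilin g ->
  Dl g (alHi h) = Dl (fun u v => g (alHi u) (alHi v)) h.
Proof.
move=> bg; rewrite -{2}(alHi_K h) D_al; last by bil.
by apply: eq_Dl => u v; rewrite !alH_K.
Qed.

Lemma coassL (W : lmodType K) (g : H -> H -> H -> W) h : trilin g ->
  Dl (fun u v => Dl (fun u' v' => g u' v' v) u) h =
  Dl (fun u v => Dl (fun u' v' => g (alH u) u' (alHi v')) v) h.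
Proof.
move=> tg; rewrite -(D_coass (g := fun a b c => g a b (alHi c))); last by tril.
apply: eq_Dl => u v; apply: eq_Dl => u' v'; by rewrite alH_K.
Qed.

Lemma coassR (W : lmodType K) (g : H -> H -> H -> W) h : trilin g ->
  Dl (fun u v => Dl (fun u' v' => g u u' v') v) h =
  Dl (fun u v => Dl (fun u' v' => g (alHi u') v' (alH v)) u) h.
Proof.
move=> tg; rewrite (D_coass (g := fun a b c => g (alHi a) b c)); last by tril.
by apply: eq_Dl => u v; apply: eq_Dl => u' v'; rewrite alH_K.
Qed.

Lemma act_mulD g a a' :
  act g (muA a a') = Dl (fun u v => muA (act (alHi (alHi u)) a) (act (alHi (alHi v)) a')) g.
Proof.
case: hA => _ _ _ _ hm; rewrite -{1}(alHi_K g) -(alHi_K (alHi g)) hm.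
rewrite sumDl /= D_ali; last by bil.
by rewrite D_ali; last by bil.
Qed.

Lemma ract_mulD g c c' :
  ract (muC c c') g = Dl (fun u v => muC (ract c (alHi (alHi u))) (ract c' (alHi (alHi v)))) g.
Proof.
case: hC => _ _ _ _ hm; rewrite -{1}(alHi_K g) -(alHi_K (alHi g)) hm.
rewrite sumDl /= D_ali; last by bil.
by rewrite D_ali; last by bil.
Qed.

Ltac todl1 := repeat progress rewrite ?big_map ?big_allpairs_dep ?big_flatten ?big_cons ?big_nil ?addr0 /=;
  try rewrite sumDl; try (under eq_Dl => ? ? do todl1).
Ltac todl := todl1; symmetry; todl1; symmetry.

Definition R1 h a := [seq (act (alHi (alHi p.1)) (alAi a), alHi p.2) | p <- Delta h].
Definition R2 c h := [seq (alHi p.1, ract (alCi c) (alHi (alHi p.2))) | p <- Delta h].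
Definition R3 (c : C) (a : A) := [:: (a, c)].

Lemma tw1 : hom_twisting muA alA muH alH R1.
Proof.
split.
- move=> h a W f bf; rewrite /R1; todl.
  rewrite D_al; last by bil.
  by apply: eq_Dl => u v; rewrite act_al !alHi_K alAi_K alA_K !alH_K.
- move=> y x x' W f bf; rewrite /R1; todl.
  rewrite D_al; last by bil.
  under eq_Dl => u v.
    rewrite !alH_K malAi act_mulD (pull (E := fun X => f X v)); last by lin.
    rewrite D_ali; last by bil.
    over.
  rewrite coassL; last by tril.
  apply: eq_Dl => u v; rewrite D_ali; last by bil.
  by apply: eq_Dl => u' v'; rewrite !alHi_K !alH_K.
- move=> y y' x W f bf; rewrite /R1; todl.
  rewrite D_mul; last by bil.
  symmetry; rewrite Dl_comm; apply: eq_Dl => u v; apply: eq_Dl => u' v'.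
  by rewrite act_al alAi_K alHi_K !malHi -{1}[alHi u](alHi_K (alHi u)) act_mod alAi_K alA_K.
Qed.

Lemma tw2 : hom_twisting muH alH muC alC R2.
Proof.
split.
- move=> c h W f bf; rewrite /R2; todl.
  rewrite D_al; last by bil.
  by apply: eq_Dl => u v; rewrite ract_al !alHi_K alCi_K alC_K !alH_K.
- move=> y x x' W f bf; rewrite /R2; todl.
  rewrite D_mul; last by bil.
  apply: eq_Dl => u v; apply: eq_Dl => u' v'.
  by rewrite alC_K ract_ali -(alHi_K (alHi (alHi v'))) ract_mod ract_al !alCi_K malH !alHi_K !malHi.
- move=> y y' x W f bf; rewrite /R2; todl.
  rewrite D_al; last by bil.
  under eq_Dl => u v.
    rewrite !alH_K malCi ract_mulD (pull (E := fun X => f u X)); last by lin.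
    rewrite D_ali; last by bil.
    over.
  symmetry.
  under eq_Dl => u v.
    rewrite D_ali; last by bil.
    over.
  rewrite coassL; last by tril.
  by apply: eq_Dl => u v; apply: eq_Dl => u' v'; rewrite alH_K alHi_K.
Qed.

Lemma tw3 : hom_twisting muA alA muC alC R3.
Proof. by split=> * W f bf. Qed.

Lemma braid s : teq3 (tens_r R2 (tens_l R3 (tens_r R1 s))) (tens_l R1 (tens_r R3 (tens_l R2 s))).
Proof.
move=> W f tf; rewrite /tens_r /tens_l !big_flatten !big_map !big_flatten !big_map !big_flatten !big_map.
apply: eq_bigr => -[[c h] a] _ /=; rewrite /R1 /R2 /R3; todl.
under eq_Dl => u v.
  rewrite D_ali; last by bil.
  over.
symmetry.
under eq_Dl => u v.
  rewrite D_ali; last by bil.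
  over.
rewrite coassL; last by tril.
by apply: eq_Dl => u v; apply: eq_Dl => u' v'; rewrite alH_K.
Qed.

Definition itpp := itp_pure muA muH muC R1 R2 R3.
Definition itpl := itp muA muH muC R1 R2 R3.
Definition al3 := alpha3 alA alH alC.

Definition PhiF (W : lmodType K) (f : A -> H -> C -> W) x y z (v : A * H * C) :=
  Dl (fun u1 v1 => Dl (fun u2 v2 => f (muA x (act (alHi (alHi u1)) (alAi v.1.1)))
     (muH (alHi v1) (alHi u2)) (muC (ract (alCi z) (alHi (alHi v2))) v.2)) v.1.2) y.

Lemma itpp_sum (W : lmodType K) (F : A * H * C -> W) u v :
  \sum_(w <- itpp u v) F w =
  Dl (fun u1 v1 => Dl (fun u2 v2 => F (muA u.1.1 (act (alHi (alHi u1)) (alAi v.1.1)),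
     muH (alHi v1) (alHi u2), muC (ract (alCi u.2) (alHi (alHi v2))) v.2)) v.1.2) u.1.2.
Proof. by rewrite /itpp /itp_pure /R1 /R2 /R3; todl. Qed.

Lemma itpp_f (W : lmodType K) (f : A -> H -> C -> W) u v :
  \sum_(w <- itpp u v) f w.1.1 w.1.2 w.2 = PhiF f u.1.1 u.1.2 u.2 v.
Proof. by rewrite itpp_sum. Qed.

Lemma itp_sum (W : lmodType K) (F : A * H * C -> W) s t :
  \sum_(w <- itpl s t) F w = \sum_(u <- s) \sum_(v <- t) \sum_(w <- itpp u v) F w.
Proof. by rewrite /itpl /itp big_flatten /= big_allpairs_dep. Qed.

Lemma itp_sum_f (W : lmodType K) (f : A -> H -> C -> W) s t :
  \sum_(w <- itpl s t) f w.1.1 w.1.2 w.2 =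
  \sum_(u <- s) \sum_(v <- t) PhiF f u.1.1 u.1.2 u.2 v.
Proof.
rewrite itp_sum; apply: eq_bigr => u _; apply: eq_bigr => v _; exact: itpp_f.
Qed.

Lemma wd_l s s' t : teq3 s s' -> teq3 (itpl s t) (itpl s' t).
Proof.
move=> hs W f tf; rewrite !itp_sum_f.
apply: (hs W (fun x y z => \sum_(v <- t) PhiF f x y z v)).
rewrite /PhiF; tril.
Qed.

Lemma wd_r s t t' : teq3 t t' -> teq3 (itpl s t) (itpl s t').
Proof.
move=> ht W f tf; rewrite !itp_sum_f exchange_big [RHS]exchange_big.
apply: (ht W (fun x y z => \sum_(v <- s) PhiF f v.1.1 v.1.2 v.2 (x, y, z))).
rewrite /PhiF /=; tril.
Qed.

Lemma al_wd s s' : teq3 s s' -> teq3 (al3 s) (al3 s').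
Proof.
move=> hs W f tf; rewrite /al3 /alpha3 !big_map /=.
apply: (hs W (fun x y z => f (alA x) (alH y) (alC z))); tril.
Qed.

Lemma mult_pure (W : lmodType K) (f : A -> H -> C -> W) (tf : trilin f) u v :
  PhiF (fun x y z => f (alA x) (alH y) (alC z)) u.1.1 u.1.2 u.2 v =
  PhiF f (alA u.1.1) (alH u.1.2) (alC u.2) (alA v.1.1, alH v.1.2, alC v.2).
Proof.
rewrite /PhiF /= D_al; last by bil.
apply: eq_Dl => u1 v1; rewrite D_al; last by bil.
apply: eq_Dl => u2 v2.
by rewrite malA act_al alAi_K !alHi_K alA_K malH !alHi_K !alH_K malC ract_al alCi_K alC_K !alHi_K.
Qed.

Lemma hom_mult s t : teq3 (al3 (itpl s t)) (itpl (al3 s) (al3 t)).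
Proof.
move=> W f tf; rewrite /al3 /alpha3 big_map /=.
rewrite (itp_sum_f (fun x y z => f (alA x) (alH y) (alC z))) itp_sum_f big_map.
apply: eq_bigr => u _; rewrite big_map; apply: eq_bigr => v _.
exact: mult_pure.
Qed.

Ltac pullD h0 :=
  let doit L :=
    match L with context Ctx [@Dl ?W ?g h0] =>
      let E := constr:(fun X : W => ltac:(let t := context Ctx [X] in exact t)) in
      rewrite (@pull W _ E g h0); [| lin] end in
  lazymatch goal with
  | |- Under_rel _ _ ?L _ => doit L
  | |- ?L = _ => doit L end.

Lemma assoc_pure (W : lmodType K) (f : A -> H -> C -> W) (tf : trilin f) a h c a' h' c' a'' h'' c'' :
 \sum_(y <- itpp (a', h', c') (a'', h'', c'')) PhiF f (alA a) (alH h) (alC c) y =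
 \sum_(y <- itpp (a, h, c) (a', h', c')) PhiF f y.1.1 y.1.2 y.2 (alA a'', alH h'', alC c'').
Proof.
rewrite !itpp_sum /PhiF /=.
under eq_Dl => p1 p2 do rewrite Dl_comm.
rewrite Dl_comm D_al; last by bil.
under eq_Dl => r1 r2.
  under eq_Dl => p1 p2.
    rewrite alH_K malAi act_mulD.
    pullD (alHi r1).
    rewrite D_ali; last by bil.
    over.
  rewrite Dl_comm.
  over.
rewrite coassL; last by tril.
symmetry.
under eq_Dl => r1 r2.
  under eq_Dl => p1 p2.
    rewrite D_mul; last by bil.
    rewrite D_ali; last by bil.
    under eq_Dl => m1 m2.
      rewrite D_ali; last by bil.
      under eq_Dl => n1 n2.
        rewrite D_al; last by bil.
        under eq_Dl => q1 q2.
          rewrite !alH_K malCi ract_mulD.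
          pullD (alHi q2).

          rewrite D_ali; last by bil.
          over.
        over.
      over.
    over.
  rewrite Dl_comm.
  over.
symmetry; apply: eq_Dl => r1 r2; apply: eq_Dl => m1 m2.
under eq_Dl => p1 p2.
  under eq_Dl => q1 q2.
    rewrite D_mul; last by bil.
    rewrite D_ali; last by bil.
    under eq_Dl => s1 s2.
      rewrite D_ali; last by bil.
      over.
    over.
  rewrite Dl_comm.
  over.
symmetry; rewrite coassL; last by tril.
symmetry; apply: eq_Dl => p1 p2; apply: eq_Dl => s1 s2.
rewrite coassL; last by tril.
apply: eq_Dl => q1 q2; apply: eq_Dl => k1 k2.
congr (f _ _ _).
- by rewrite !alH_K asA act_al alAi_K act_mod alAi_K alA_K !malHi.
- by rewrite !alH_K !malHi -{2}(alHi_K q1) -asH alHi_K.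
- by rewrite alC_K !malHi -asC ract_al alCi_K ract_mod alCi_K.
Qed.



Lemma hom_assoc_l s t u : teq3 (itpl (al3 s) (itpl t u)) (itpl (itpl s t) (al3 u)).
Proof.
move=> W f tf; rewrite itp_sum_f /al3 /alpha3 big_map.
under eq_bigr => x _ do rewrite itp_sum.
symmetry; rewrite itp_sum_f exchange_big big_map.
under eq_bigr => w _ do rewrite itp_sum.
rewrite exchange_big; apply: eq_bigr => -[[a h] c] _.
rewrite exchange_big; apply: eq_bigr => -[[a' h'] c'] _.
apply: eq_bigr => -[[a'' h''] c''] _ /=.
by rewrite (assoc_pure tf).
Qed.

Lemma explicit a a' h h' c c' :
  teq3 (itpp (a, h, c) (a', h', c'))
    [seq (muA a (act (alHi (alHi p.1)) (alAi a')), alHi (muH p.2 q.1),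
          muC (ract (alCi c) (alHi (alHi q.2))) c') | p <- Delta h, q <- Delta h'].
Proof.
move=> W f tf; rewrite itpp_f /PhiF /=; todl.
by apply: eq_Dl => u v; apply: eq_Dl => u' v'; rewrite malHi.
Qed.

End Main.

Theorem proposition3p16 (K : fieldType)
  (H : lmodType K) (muH : H -> H -> H) (Delta : H -> seq (H * H)) (alH alHi : H -> H)
  (A : lmodType K) (muA : A -> A -> A) (alA alAi : A -> A) (act : H -> A -> A)
  (C : lmodType K) (muC : C -> C -> C) (alC alCi : C -> C) (ract : C -> H -> C)
  (hH : hom_bialg muH Delta alH)
  (hA : left_mod_hom_alg muH Delta alH muA alA act)
  (hC : right_mod_hom_alg muH Delta alH muC alC ract)
  (alH_K : cancel alH alHi) (alHi_K : cancel alHi alH)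
  (alA_K : cancel alA alAi) (alAi_K : cancel alAi alA)
  (alC_K : cancel alC alCi) (alCi_K : cancel alCi alC) :
  let R1 : H -> A -> seq (A * H) := fun h a =>
    [seq (act (alHi (alHi p.1)) (alAi a), alHi p.2) | p <- Delta h] in
  let R2 : C -> H -> seq (H * C) := fun c h =>
    [seq (alHi p.1, ract (alCi c) (alHi (alHi p.2))) | p <- Delta h] in
  let R3 : C -> A -> seq (A * C) := fun c a => [:: (a, c)] in
  [/\ (* R1, R2, R3 are Hom-twisting maps *)
      [/\ hom_twisting muA alA muH alH R1,
          hom_twisting muH alH muC alC R2 &
          hom_twisting muA alA muC alC R3],
      (* braid relation on C (x) H (x) A *)
      forall s : seq (C * H * A),
        teq3 (tens_r R2 (tens_l R3 (tens_r R1 s)))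
             (tens_l R1 (tens_r R3 (tens_l R2 s))),
      (* A # H # C is a Hom-associative algebra *)
      hom_assoc3 (itp muA muH muC R1 R2 R3) (alpha3 alA alH alC) &
      (* explicit form of its multiplication *)
      forall (a a' : A) (h h' : H) (c c' : C),
        teq3 (itp_pure muA muH muC R1 R2 R3 (a, h, c) (a', h', c'))
             [seq (muA a (act (alHi (alHi p.1)) (alAi a')),
                   alHi (muH p.2 q.1),
                   muC (ract (alCi c) (alHi (alHi q.2))) c')
                | p <- Delta h, q <- Delta h']].
Proof.
move=> R1 R2 R3.
have T3 : forall s1 s2 s3 : seq (A * H * C), teq3 s1 s2 -> teq3 s2 s3 -> teq3 s1 s3.
  by move=> s1 s2 s3 e1 e2 W f tf; rewrite (e1 W f tf) (e2 W f tf).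
split.
- split.
  + by eapply tw1; eassumption.
  + by eapply tw2; eassumption.
  + by eapply tw3; eassumption.
- by move=> s; eapply braid; eassumption.
- split.
  + move=> s s' t t' hs ht; apply: T3.
      by eapply wd_l; eassumption.
    by eapply wd_r; eassumption.
  + by move=> s s'; eapply al_wd; eassumption.
  + by move=> s t; eapply hom_mult; eassumption.
  + by move=> s t u; eapply hom_assoc_l; eassumption.
- by move=> a a' h h' c c'; eapply explicit; eassumption.
Qed.
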